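(* Let $\mathcal{C}\subset\mathbb{R}^n$ be closed and Clarke regular, $G:\mathcal{C}\to\mathbb{S}^n_+$ a metric, and $f:\mathbb{R}^n\to\mathbb{R}^n$ a vector field such that $x\mapsto\|f(x)\|_{G(x)}$ is bounded on $\mathcal{C}$. Let $\gamma\ge\sup_{x\in\mathcal{C}}\|f(x)\|_{G(x)}$. Then $x:[0,T]\to\mathcal{C}$ with $T>0$ is a solution of $\dot x=\Pi^G_\mathcal{C}[f](x)$, $x\in\mathcal{C}$, if and only if it is a solution of $$\dot x\in F(x):=f(x)-N^G_x\mathcal{C}\cap\gamma\mathbb{B},\qquad x\in\mathcal{C}.$$
   Context: $\mathbb{B}$ is the closed unit ball; $\mathbb{S}^n_+$ the symmetric positive definite matrices; $\langle u,v\rangle_{G(x)}:=u^TG(x)v$, $\|u\|_{G(x)}:=\langle u,u\rangle_{G(x)}^{1/2}$. Tangent cone: $v\in T_x\mathcal{C}$ iff there are $x_k\to x$ in $\mathcal{C}$ and $\delta_k\to0^+$ with $(x_k-x)/\delta_k\to v$; $\mathcal{C}$ is Clarke regular if $x\mapsto T_x\mathcal{C}$ is inner semicontinuous (then $T_x\mathcal{C}$ is closed convex). $N^G_x\mathcal{C}:=\{\eta:\langle\eta,v\rangle_{G(x)}\le0\ \forall v\in T_x\mathcal{C}\}$. $\Pi^G_\mathcal{C}[f](x):=\arg\min_{v\in T_x\mathcal{C}}\|v-f(x)\|_{G(x)}$ for $x\in\mathcal{C}$. Solutions are Carathéodory: absolutely continuous $x$ with $x(t)\in\mathcal{C}$ and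 the differential equation/inclusion holding for almost all $t\in[0,T]$. *)

(* Defs.v *)
From mathcomp Require Import all_boot all_order all_algebra.
From mathcomp Require Import all_classical all_reals all_analysis.
Import Order.TTheory GRing.Theory Num.Theory numFieldNormedType.Exports.
Set Implicit Arguments. Unset Strict Implicit. Unset Printing Implicit Defensive.
Local Open Scope classical_set_scope.
Local Open Scope ring_scope.

Section Defs.
Variables (R : realType) (n : nat).
Local Notation vec := 'cV[R]_n.

Definition gminner (G : 'M[R]_n) (u v : vec) : R := (u^T *m G *m v) 0 0.
Definition gmnorm (G : 'M[R]_n) (u : vec) : R := Num.sqrt (gminner G u u).

Definition spd (G : 'M[R]_n) : Prop :=
  G^T = G /\ forall u : vec, u != 0 -> 0 < gminner G u u.

Definition metric_on (C : set vec) (G : vec -> 'M[R]_n) : Prop :=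
  forall x, C x -> spd (G x).

Definition tangent_cone (C : set vec) (x : vec) : set vec :=
  fun v => exists (xk : nat -> vec) (dk : nat -> R),
    (forall k, C (xk k)) /\ (forall k, 0 < dk k) /\
    xk @ \oo --> x /\ dk @ \oo --> (0 : R) /\
    (fun k => (dk k)^-1 *: (xk k - x)) @ \oo --> v.

(* Inner semicontinuity of x |-> T_x C on C (sequential form):
   for every x in C, v in T_x C and every sequence y_k -> x in C there are
   v_k in T_{y_k} C with v_k -> v. *)
Definition clarke_regular (C : set vec) : Prop :=
  forall x, C x -> forall v, tangent_cone C x v ->
  forall yk : nat -> vec, (forall k, C (yk k)) -> yk @ \oo --> x ->
  exists vk : nat -> vec, (forall k, tangent_cone C (yk k) (vk k)) /\
    vk @ \oo --> v.

Definition gnormal_cone (C : set vec) (G : vec -> 'M[R]_n) (x : vec) : set vec :=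
  fun eta => forall v, tangent_cone C x v -> gminner (G x) eta v <= 0.

Definition gproj (C : set vec) (G : vec -> 'M[R]_n) (f : vec -> vec) (x : vec)
  : set vec :=
  fun v => tangent_cone C x v /\
    forall w, tangent_cone C x w ->
      gmnorm (G x) (v - f x) <= gmnorm (G x) (w - f x).

Definition pds_inclusion (C : set vec) (G : vec -> 'M[R]_n) (f : vec -> vec)
  (gamma : R) (x : vec) : set vec :=
  fun w => exists eta, gnormal_cone C G x eta /\ gmnorm (G x) eta <= gamma /\
    w = f x - eta.

Definition abs_cont_on (a b : R) (x : R -> vec) : Prop :=
  forall eps : R, 0 < eps -> exists2 delta : R, 0 < delta &
    forall (m : nat) (s t : 'I_m -> R),
      (forall i, a <= s i /\ s i <= t i /\ t i <= b) ->
      (forall i j, i != j -> t i <= s j \/ t j <= s i) ->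
      \sum_(i < m) (t i - s i) < delta ->
      \sum_(i < m) `|x (t i) - x (s i)| < eps.

Definition caratheodory_solution (C : set vec) (Phi : vec -> set vec)
  (T : R) (x : R -> vec) : Prop :=
  abs_cont_on 0 T x /\
  (forall t, 0 <= t <= T -> C (x t)) /\
  {ae (@lebesgue_measure R), forall t, 0 <= t <= T ->
     derivable x t 1 /\ Phi (x t) ('D_1 x t)}.

End Defs.

(* Main.v *)
Require Import Defs.
From mathcomp Require Import all_boot all_order all_algebra.
From mathcomp Require Import all_classical all_reals all_analysis.
From mathcomp Require Import ring lra.
Import Order.TTheory GRing.Theory Num.Theory numFieldNormedType.Exports.
Local Open Scope classical_set_scope.
Local Open Scope ring_scope.
Section GM.
Variables (R : realType) (n : nat).
Implicit Types (G : 'M[R]_n) (u v w : 'cV[R]_n).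
Lemma gmDl G u v w : gminner G (u + v) w = gminner G u w + gminner G v w.
Proof. by rewrite /gminner linearD !mulmxDl mxE. Qed.
Lemma gmDr G u v w : gminner G w (u + v) = gminner G w u + gminner G w v.
Proof. by rewrite /gminner !mulmxDr mxE. Qed.
Lemma gmZl G a u w : gminner G (a *: u) w = a * gminner G u w.
Proof. by rewrite /gminner linearZ /= -!scalemxAl mxE. Qed.
Lemma gmZr G a u w : gminner G w (a *: u) = a * gminner G w u.
Proof. by rewrite /gminner -!scalemxAr mxE. Qed.
Lemma gmNl G u w : gminner G (- u) w = - gminner G u w.
Proof. by rewrite -scaleN1r gmZl mulN1r. Qed.
Lemma gmNr G u w : gminner G w (- u) = - gminner G w u.
Proof. by rewrite -scaleN1r gmZr mulN1r. Qed.
Lemma gm_sym G u w : G^T = G -> gminner G u w = gminner G w u.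
Proof.
move=> GT; rewrite /gminner.
have -> : (u^T *m G *m w) 0 0 = ((u^T *m G *m w)^T) 0 0 by rewrite [RHS]mxE.
by rewrite !trmx_mul trmxK GT mulmxA.
Qed.
Lemma gm_ge0 G u : spd G -> 0 <= gminner G u u.
Proof.
move=> [_ pos]; have [->|u0] := eqVneq u 0.
  by rewrite /gminner mulmx0 mxE.
exact/ltW/pos.
Qed.
Lemma gmnorm_le G u w : spd G -> gminner G u u <= gminner G w w -> gmnorm G u <= gmnorm G w.
Proof. by move=> sG h; rewrite /gmnorm ler_sqrt // gm_ge0. Qed.
Lemma gmnorm_leE G u w : spd G -> gmnorm G u <= gmnorm G w -> gminner G u u <= gminner G w w.
Proof. by move=> sG; rewrite /gmnorm ler_sqrt // gm_ge0. Qed.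
End GM.
Arguments gmDl {R n}. Arguments gmDr {R n}. Arguments gmZl {R n}. Arguments gmZr {R n}.
Arguments gmNl {R n}. Arguments gmNr {R n}. Arguments gm_sym {R n}. Arguments gm_ge0 {R n G} u.
Arguments gmnorm_le {R n G u w}. Arguments gmnorm_leE {R n G u w}.
Lemma gm_key (R : realType) n (G : 'M[R]_n) e w : spd G ->
  (forall s, 0 < s -> gminner G e e <= gminner G (e + s *: w) (e + s *: w)) ->
  0 <= gminner G e w.
Proof.
move=> sG H; rewrite leNgt; apply/negP => Bneg.
pose c := - gminner G e w; pose q := gminner G w w; pose s := c / (q + 1).
have q0 : 0 <= q by exact: gm_ge0.
have c0 : 0 < c by rewrite /c oppr_gt0.
have s0 : 0 < s by rewrite divr_gt0 // ltr_wpDl.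
have sq : s * (q + 1) = c by rewrite /s mulfVK // gt_eqF // ltr_wpDl.
have := H _ s0.
rewrite gmDl !gmDr !gmZl !gmZr (gm_sym G w e (proj1 sG)) -/q.
have -> : gminner G e w = - c by rewrite opprK.
move=> h; nra.
Qed.
Section S.
Variable R : realType.
Lemma entry_le_norm m n (A : 'M[R]_(m,n)) i j : `|A i j| <= `|A|.
Proof.
rewrite [X in _ <= X]/Num.norm /= mx_normrE.
exact: (@le_bigmax _ _ _ 0 (fun ij : 'I_m * 'I_n => `|A ij.1 ij.2|) (i, j)).
Qed.
Lemma norm_le_entries m n (A : 'M[R]_(m,n)) M : 0 <= M -> (forall i j, `|A i j| <= M) -> `|A| <= M.
Proof.
move=> M0 H; rewrite [X in X <= _]/Num.norm /= mx_normrE.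
by apply/bigmax_leP; split => // -[i j] _; exact: H.
Qed.
Lemma normT m n (A : 'M[R]_(m,n)) : `|A^T| = `|A|.
Proof.
apply/le_anti/andP; split; apply: norm_le_entries => // i j.
  by rewrite mxE; exact: entry_le_norm.
have -> : A i j = A^T j i by rewrite mxE.
exact: entry_le_norm.
Qed.
Lemma trmx_cont m n : continuous (@trmx R m n).
Proof.
move=> /= M s /= /(nbhs_ballP (M^T)) [e e0 es].
apply/nbhs_ballP; exists e => //= N [e0' MN]; apply: es; split => // i j; rewrite !mxE; exact: MN.
Qed.
Lemma contf n (p : 'cV[R]_n) : continuous (fun u : 'rV[R]_n => `|p - u^T|).
Proof.
move=> u.
have h1 : {for u, continuous (fun u : 'rV[R]_n => p - u^T)}.
  exact: (cvgB (cvg_cst p) (@trmx_cont 1 n u)).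
exact: (continuous_comp h1 (@norm_continuous _ _ _)).
Qed.

Lemma nearest n (C : set 'cV[R]_n) : closed C -> forall c0 p, C c0 ->
  exists2 z, C z & forall w, C w -> `|p - z| <= `|p - w|.
Proof.
move=> Ccl c0 p Cc0.
pose r := `|p - c0|.
pose K := [set u : 'rV[R]_n | C u^T /\ `|p - u^T| <= r].
have cK : compact K.
  apply: bounded_closed_compact.
    rewrite /= /bounded_near; near=> M.
    move=> u [_ hu] /=.
    rewrite -normT; apply: (le_trans _ (_ : `|p| + r <= M)).
      have -> : u^T = p - (p - u^T) by rewrite subKr.
      apply: (le_trans (ler_normB _ _)); exact: lerD.
    near: M; apply: nbhs_pinfty_ge; exact: num_real.
  have -> : K = (@trmx R 1 n @^-1` C) `&` ((fun u : 'rV[R]_n => `|p - u^T|) @^-1` [set y | y <= r]) by [].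
  apply: closedI; apply: preimage_closed => //.
  - move=> u _; exact: trmx_cont.
  - move=> u _; exact: contf.
have K0 : K !=set0 by exists c0^T; rewrite /K /= trmxK; split.
have [c /set_mem [Cc cr] cmin] := compact_EVT_min K0 cK (continuous_subspaceT (@contf n p)).
exists c^T => // w Cw.
have [wr|rw] := leP (`|p - w|) r.
  have := cmin w^T; rewrite trmxK; apply; apply/mem_set; split; rewrite ?trmxK //.
exact: (le_trans cr (ltW rw)).
Unshelve. all: by end_near.
Qed.

Variables (n : nat) (C : set 'cV[R]_n).
Local Notation TC := (tangent_cone C).

Lemma tc_scale x s w : 0 < s -> TC x w -> TC x (s *: w).
Proof.
move=> s0 [xk [dk [Cx [dp [xkx [dk0 cv]]]]]].
exists xk, (fun k => dk k / s); split => //; split; first by move=> k; rewrite divr_gt0.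
split => //; split.
  rewrite -(mul0r s^-1); exact: cvgMl.
have -> : (fun k => (dk k / s)^-1 *: (xk k - x)) = s \*: (fun k => (dk k)^-1 *: (xk k - x)).
  by apply/funext => k /=; rewrite invfM invrK scalerA mulrC.
exact: cvgZr.
Qed.

Lemma uisc : clarke_regular C -> forall x b, C x -> TC x b -> forall e, 0 < e ->
  exists2 d, 0 < d & forall y, C y -> `|y - x| < d -> exists2 u, TC y u & `|u - b| < e.
Proof.
move=> creg x b Cx Tb e e0; apply: contrapT => H.
have H' : forall k : nat, exists y, C y /\ `|y - x| < k.+1%:R^-1 /\
    forall u, TC y u -> e <= `|u - b|.
  move=> k; apply: contrapT => nE; apply: H; exists k.+1%:R^-1 => // y Cy yx.
  apply: contrapT => nu; apply: nE; exists y; split => //; split => // u Tu.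
  by rewrite leNgt; apply/negP => ub; apply: nu; exists u.
have [yk Hy] := choice H'.
have ykx : yk @ \oo --> x.
  apply/cvgrPdist_lt => eps eps0.
  have hh : \forall t \near \oo, `|harmonic t : R| < eps := (cvgr0Pnorm_lt (fun k : nat => (harmonic k : R))).1 (@cvg_harmonic R) eps eps0.
  near=> k.
  have : `|harmonic k| < eps.
    by near: k; apply: hh.
  rewrite /harmonic /= ger0_norm // => hk.
  rewrite distrC; apply: lt_trans hk; exact: (proj1 (proj2 (Hy k))).
have [vk [Tvk vkb]] := creg x Cx b Tb yk (fun k => proj1 (Hy k)) ykx.
move/cvgrPdist_lt: vkb => /(_ e e0) /filter_ex [k hk].
have := proj2 (proj2 (Hy k)) _ (Tvk k).
by rewrite distrC leNgt hk.
Unshelve. all: by end_near.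
Qed.

Lemma kl : closed C -> clarke_regular C -> forall x b, C x -> TC x b -> forall e, 0 < e ->
  exists2 d, 0 < d & forall y h, C y -> `|y - x| < d -> 0 < h -> h * (`|b| + e) < d ->
  exists2 z, C z & `|y + h *: b - z| <= e * h.
Proof.
move=> Ccl creg x b Cx Tb e e0.
have e20 : 0 < e / 2 by rewrite divr_gt0.
have [del del0 Hd] := uisc creg x b Cx Tb (e / 2) e20.
exists (del / 2); first by rewrite divr_gt0.
move=> y h Cy yx h0 hb.
pose A := [set t : R | 0 <= t <= h /\ exists2 z, C z & `|y + t *: b - z| <= e * t].
have A0 : A 0.
  split; first by rewrite lexx ltW.
  by exists y; rewrite ?scale0r ?addr0 ?subrr ?normr0 ?mulr0.
have Aub : ubound A h by move=> t [/andP[_ ?] _].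
have hsA : has_sup A by split; [exists 0 | exists h].
pose s := sup A.
have s0 : 0 <= s by apply: sup_upper_bound.
have sh : s <= h by apply: ge_sup => //; exists 0.
pose p := y + s *: b.
have [z0 Cz0 z0min] := @nearest n C Ccl y p Cy.
have b1 : 0 < `|b| + 1 by rewrite ltr_wpDl.
have pz0 : `|p - z0| <= e * s.
  apply/ler_addgt0Pr => zeta zeta0.
  pose zt := zeta / (`|b| + 1).
  have zt0 : 0 < zt by rewrite divr_gt0.
  have ztb : zt * (`|b| + 1) = zeta by rewrite /zt mulfVK // gt_eqF.
  have [t [/andP [t0 th] [zt' Czt ht]] st] := sup_adherent zt0 hsA.
  have ts : t <= s by apply: sup_upper_bound => //; split; [apply/andP|exists zt'].
  apply: le_trans (z0min _ Czt) _.
  have -> : p - zt' = (s - t) *: b + (y + t *: b - zt').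
    by apply/matrixP => i j; rewrite !mxE; ring.
  apply: le_trans (ler_normD _ _) _.
  rewrite normrZ ger0_norm ?subr_ge0 //.
  have nb := normr_ge0 b.
  have : (s - t) * `|b| <= zeta.
    rewrite -ztb; apply: le_trans (_ : zt * `|b| <= _); last by rewrite ler_pM2l // lerDl.
    by apply: ler_wpM2r => //; move: st; rewrite -/s; lra.
  have : e * t <= e * s by rewrite ler_pM2l.
  lra.
have [hs|slt] := leP h s.
  have hs' : s = h by apply/le_anti/andP.
  by exists z0 => //; rewrite -hs'.
exfalso.
have hz0 : `|z0 - x| < del.
  have -> : z0 - x = - (p - z0) + s *: b + (y - x).
    by apply/matrixP => i j; rewrite !mxE; ring.
  apply: le_lt_trans (ler_normD _ _) _.
  apply: le_lt_trans (lerD (ler_normD _ _) (lexx _)) _.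
  rewrite normrN normrZ ger0_norm //.
  have nb := normr_ge0 b.
  have : s * `|b| <= h * `|b| by apply: ler_wpM2r => //; apply: ltW.
  have : e * s <= e * h by rewrite ler_pM2l // ltW.
  lra.
have [u Tu ub] := Hd z0 Cz0 hz0.
case: Tu => zk [dk [Czk [dp [zkz [dk0 cv]]]]].
have hs0 : 0 < h - s by rewrite subr_gt0.
near \oo => k.
have dkh : dk k < h - s.
  have : `|0 - dk k| < h - s by near: k; apply: (cvgrPdist_lt _ _).1 dk0 _ hs0.
  by rewrite sub0r normrN gtr0_norm.
have dkv : `|u - (dk k)^-1 *: (zk k - z0)| < e / 2.
  by near: k; apply: (cvgrPdist_lt _ _).1 cv _ e20.
have Ast : A (s + dk k).
  split.
    apply/andP; split; first by rewrite addr_ge0 // ltW.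
    by rewrite -lerBrDl ltW.
  exists (zk k) => //.
  have dk0' : dk k != 0 by rewrite gt_eqF.
  have -> : y + (s + dk k) *: b - zk k =
     (p - z0) + dk k *: (b - u) + dk k *: (u - (dk k)^-1 *: (zk k - z0)).
    by apply/matrixP => i j; rewrite !mxE; field.
  apply: le_trans (ler_normD _ _) _.
  apply: le_trans (lerD (ler_normD _ _) (lexx _)) _.
  rewrite !normrZ gtr0_norm // (distrC b u).
  have h1 : dk k * `|u - b| <= dk k * (e / 2) by rewrite ler_pM2l // ltW.
  have h2 : dk k * `|u - (dk k)^-1 *: (zk k - z0)| <= dk k * (e / 2) by rewrite ler_pM2l // ltW.
  lra.
have := sup_upper_bound hsA Ast.
rewrite -/s => h1.
have := dp k; lra.
Unshelve. all: by end_near.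
Qed.

Lemma tc_add : closed C -> clarke_regular C -> forall x a b, C x -> TC x a -> TC x b -> TC x (a + b).
Proof.
move=> Ccl creg x a b Cx [xk [dk [Cxk [dp [xkx [dk0 cv]]]]]] Tb.
have /choice [z Hz] : forall k, exists z, C z /\
    forall w, C w -> `|xk k + dk k *: b - z| <= `|xk k + dk k *: b - w|.
  move=> k; have [z Cz zm] := @nearest n C Ccl x (xk k + dk k *: b) Cx.
  by exists z.
have wcv : (fun k => (dk k)^-1 *: (z k - x)) @ \oo --> a + b.
  have -> : (fun k => (dk k)^-1 *: (z k - x)) = (fun k => (dk k)^-1 *: (xk k - x) + b
      + (dk k)^-1 *: (z k - (xk k + dk k *: b))).
    apply/funext => k; have dk0' : dk k != 0 by rewrite gt_eqF.
    by apply/matrixP => i j; rewrite !mxE; field.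
  rewrite -[a + b]addr0; apply: cvgD; first by apply: cvgD => //; exact: cvg_cst.
  apply/cvgr0Pnorm_lt => eps eps0.
  have e20 : 0 < eps / 2 by rewrite divr_gt0.
  have [d d0 Hd] := kl Ccl creg x b Cx Tb (eps / 2) e20.
  have be : 0 < `|b| + eps / 2 by rewrite ltr_wpDl.
  have dbe : 0 < d / (`|b| + eps / 2) by rewrite divr_gt0.
  near=> k.
  have xkd : `|xk k - x| < d.
    rewrite distrC; near: k; exact: (cvgrPdist_lt _ _).1 xkx _ d0.
  have dkd : dk k * (`|b| + eps / 2) < d.
    rewrite -ltr_pdivlMr //.
    have : `|0 - dk k| < d / (`|b| + eps / 2).
      by near: k; exact: (cvgrPdist_lt _ _).1 dk0 _ dbe.
    by rewrite sub0r normrN gtr0_norm.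
  have [z' Cz' hz'] := Hd (xk k) (dk k) (Cxk k) xkd (dp k) dkd.
  rewrite normrZ gtr0_norm ?invr_gt0 // distrC.
  have := (proj2 (Hz k)) _ Cz' => hz.
  rewrite -ltr_pdivlMl ?invr_gt0 // invrK.
  have := dp k => dkp.
  have : dk k * (eps / 2) < dk k * eps by rewrite ltr_pM2l // ltr_pdivrMr // ltr_pMr // ltr1n.
  rewrite mulrC in hz'; lra.
exists z, dk; split; first by move=> k; exact: (proj1 (Hz k)).
split => //; split => //.
have -> : z = (fun k => x + dk k *: ((dk k)^-1 *: (z k - x))).
  apply/funext => k; have dk0' : dk k != 0 by rewrite gt_eqF.
  by apply/matrixP => i j; rewrite !mxE; field.
have : (fun k => x + dk k *: ((dk k)^-1 *: (z k - x))) @ \oo --> x + 0 *: (a + b).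
  apply: cvgD; first exact: cvg_cst.
  exact: cvgZ.
by rewrite scale0r addr0.
Unshelve. all: by end_near.
Qed.

Lemma deriv_tc_gen (x : R -> 'cV[R]_n) t T0 (hk : nat -> R) sg :
  (forall s, 0 <= s <= T0 -> C (x s)) -> derivable x t 1 ->
  (forall k, 0 <= t + hk k <= T0) -> (forall k, 0 < sg * hk k) -> hk @ \oo --> 0 ->
  TC (x t) (sg^-1 *: 'D_1 x t).
Proof.
move=> Cx Hder hb hp hk0.
have hne : forall k, hk k != 0.
  by move=> k; apply/eqP => h0; have := hp k; rewrite h0 mulr0 ltxx.
have sg0 : sg != 0 by apply/eqP => s0; have := hp 0%N; rewrite s0 mul0r ltxx.
pose g := fun h : R => h^-1 *: ((x \o shift t) (h *: 1) - x t).
have Hg : g @ 0^' --> 'D_1 x t := Hder.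
have hk0' : hk @ \oo --> 0^'.
  move=> P HP.
  apply: (@filterS _ \oo _ (hk @^-1` [set y | y != 0 -> P y]) (hk @^-1` P) _ (hk0 _ HP)).
  by move=> k /= h; apply: h; exact: hne.
have gk := cvg_comp _ _ hk0' Hg.
have ge : forall h, g h = h^-1 *: (x (t + h) - x t).
  move=> h; rewrite /g /= /shift; congr (_ *: (x _ - _)); rewrite addrC; congr (_ + _); exact: mulr1.
exists (fun k => x (t + hk k)), (fun k => sg * hk k); split; first by move=> k; exact: Cx.
split => //; split.
  have -> : (fun k => x (t + hk k)) = (fun k => x t + hk k *: g (hk k)).
    apply/funext => k; rewrite ge scalerA mulfV ?scale1r ?hne //.
    by rewrite [RHS]addrC subrK.
  have : (fun k => x t + hk k *: g (hk k)) @ \oo --> x t + 0 *: 'D_1 x t.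
    apply: cvgD; first exact: cvg_cst.
    exact: cvgZ.
  by rewrite scale0r addr0.
split.
  have : (fun k => sg * hk k) @ \oo --> sg * 0 by exact: cvgMr.
  by rewrite mulr0.
have -> : (fun k => (sg * hk k)^-1 *: (x (t + hk k) - x t)) = (fun k => sg^-1 *: g (hk k)).
  by apply/funext => k; rewrite ge invfM scalerA.
exact: cvgZr.
Qed.

Lemma deriv_tc (x : R -> 'cV[R]_n) t T0 :
  (forall s, 0 <= s <= T0 -> C (x s)) -> 0 < t -> t < T0 -> derivable x t 1 ->
  TC (x t) ('D_1 x t) /\ TC (x t) (- 'D_1 x t).
Proof.
move=> Cx t0 tT Hder.
have harm0 : forall k : nat, 0 < (harmonic k : R) by move=> k; rewrite /= invr_gt0.
have harm1 : forall k : nat, (harmonic k : R) <= 1.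
  by move=> k; rewrite /= invf_le1 // ler1n.
split.
  rewrite -[X in TC _ X]scale1r -[X in X *: _]invr1.
  apply: (@deriv_tc_gen x t T0 (fun k => (T0 - t) * harmonic k)) => //.
  - move=> k; have := harm0 k; have := harm1 k => h1 h2.
    have : (T0 - t) * harmonic k <= (T0 - t) by rewrite ler_piMr // subr_ge0 ltW.
    have : 0 <= (T0 - t) * harmonic k by rewrite mulr_ge0 // ?subr_ge0 ltW.
    move=> ? ?; apply/andP; split; lra.
  - by move=> k; rewrite mul1r mulr_gt0 // subr_gt0.
  - have H : (fun k => (T0 - t) * harmonic k) @ \oo --> (T0 - t) * 0 := cvgMr (@cvg_harmonic R).
    by rewrite mulr0 in H; exact: H.
rewrite -scaleN1r -[X in X *: _]invrN1.
apply: (@deriv_tc_gen x t T0 (fun k => - (t * harmonic k))) => //.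
- move=> k; have := harm0 k; have := harm1 k => h1 h2.
  have : t * harmonic k <= t by rewrite ler_piMr // ltW.
  have : 0 <= t * harmonic k by rewrite mulr_ge0 // ltW.
  move=> ? ?; apply/andP; split; lra.
- by move=> k; rewrite mulN1r opprK mulr_gt0.
- have h : (fun k => t * harmonic k) @ \oo --> t * 0 := cvgMr (@cvg_harmonic R).
  rewrite mulr0 in h; rewrite -oppr0; apply: cvgN; apply: h.
Qed.
End S.
Lemma pointwise (R : realType) (n : nat) (C : set 'cV[R]_n) (G : 'cV[R]_n -> 'M[R]_n)
  (f : 'cV[R]_n -> 'cV[R]_n) (gamma : R) x0 v :
  spd (G x0) -> tangent_cone C x0 v -> tangent_cone C x0 (- v) ->
  (forall s w, 0 < s -> tangent_cone C x0 w -> tangent_cone C x0 (s *: w)) ->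
  (forall a b, tangent_cone C x0 a -> tangent_cone C x0 b -> tangent_cone C x0 (a + b)) ->
  gmnorm (G x0) (f x0) <= gamma ->
  (gproj C G f x0 v <-> pds_inclusion C G f gamma x0 v).
Proof.
move=> sG Tv Tnv Tsc Tadd fg.
have sym u w := gm_sym (G x0) u w (proj1 sG).
set B := gminner (G x0).
split.
- move=> [_ Hmin].
  have [e he] : exists e, e = v - f x0 by eexists.
  have key : forall w, tangent_cone C x0 w -> 0 <= B e w.
    move=> w Tw; apply: gm_key => // s s0.
    have := Hmin _ (Tadd _ _ Tv (Tsc _ _ s0 Tw)).
    move/(gmnorm_leE sG).
    by rewrite he -addrA (addrC (s *: w)) addrA.
  have ev : B e v = 0.
    apply/eqP; rewrite eq_le key // andbT.
    by have := key _ Tnv; rewrite /B gmNr oppr_ge0.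
  have hf : f x0 = v - e by rewrite he opprB addrC subrK.
  have hfv : f x0 - v = - e by rewrite hf addrAC subrr add0r.
  exists (f x0 - v); split; [|split].
  + move=> w Tw; have := key _ Tw.
    by rewrite hfv /B gmNl oppr_le0.
  + apply: le_trans fg; apply: gmnorm_le => //.
    rewrite hfv hf /B !gmNl !gmNr !gmDl !gmDr !gmNl !gmNr (sym v e) -/B ev.
    have := gm_ge0 v sG; rewrite -/B; lra.
  + by rewrite subKr.
- move=> [eta [Neta [_ hv]]]; subst v; split => // w Tw.
  apply: gmnorm_le => //.
  have h1 := Neta _ Tw; have h2 := Neta _ Tnv.
  have -> : f x0 - eta - f x0 = - eta by rewrite addrAC subrr add0r.
  have -> : w - f x0 = (w - (f x0 - eta)) - eta by rewrite opprB addrA addrAC addrK.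
  have h3 := gm_ge0 (w - (f x0 - eta)) sG.
  move: h1 h2 h3; rewrite /B !(gmNl, gmNr, gmDl, gmDr).
  rewrite ?(sym w eta) ?(sym (f x0) eta) ?(sym (f x0) w) ?(sym v eta).
  lra.
Qed.

Theorem proposition2p11 (R : realType) (n : nat) (C : set 'cV[R]_n)
  (G : 'cV[R]_n -> 'M[R]_n) (f : 'cV[R]_n -> 'cV[R]_n) (gamma T : R) :
  closed C -> clarke_regular C -> metric_on C G ->
  (exists M : R, forall x, C x -> gmnorm (G x) (f x) <= M) ->
  (forall x, C x -> gmnorm (G x) (f x) <= gamma) ->
  0 < T ->
  forall x : R -> 'cV[R]_n,
    caratheodory_solution C (gproj C G f) T x <->
    caratheodory_solution C (pds_inclusion C G f gamma) T x.
Proof.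
move=> Ccl creg met _ fbound T0 x.
have N0 : {ae (@lebesgue_measure R), forall t : R, t != 0 /\ t != T}.
  exists ([set 0] `|` [set T]); split.
  - exact: measurableU.
  - rewrite measureU //.
      have h1 := @lebesgue_measure_set1 R 0; have h2 := @lebesgue_measure_set1 R T.
      by move: h1 h2 => /= -> ->; rewrite adde0.
    by apply/seteqP; split => t //= [-> h]; move: T0; rewrite h ltxx.
  move=> t nt.
  have [->|t0] := eqVneq t 0; first by left.
  have [->|tT] := eqVneq t T; first by right.
  by exfalso; apply: nt.
have key : forall t, 0 <= t <= T -> t != 0 -> t != T -> C (x t) -> (forall s, 0 <= s <= T -> C (x s)) ->
    derivable x t 1 ->
    (gproj C G f (x t) ('D_1 x t) <-> pds_inclusion C G f gamma (x t) ('D_1 x t)).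
  move=> t /andP[t0 tT] tn0 tnT Cxt Cx hd.
  have t0' : 0 < t by rewrite lt_neqAle eq_sym tn0.
  have tT' : t < T by rewrite lt_neqAle tnT.
  have [Tv Tnv] := @deriv_tc R n C x t T Cx t0' tT' hd.
  apply: pointwise => //.
  - exact: met.
  - by move=> s w s0 Tw; exact: tc_scale.
  - by move=> a b Ta Tb; exact: (@tc_add R n C Ccl creg (x t) a b Cxt).
  - exact: fbound.
split => -[ac [Cx H]]; split => //; split => //.
  apply: (@filterS2 _ _ (ae_filter_ringOfSetsType (@lebesgue_measure R)) _ _ _ _ N0 H) => t [tn0 tnT] Hp tb.
  have [hd hphi] := Hp tb; split => //.
  by apply/(key t tb tn0 tnT (Cx t tb) Cx hd).
apply: (@filterS2 _ _ (ae_filter_ringOfSetsType (@lebesgue_measure R)) _ _ _ _ N0 H) => t [tn0 tnT] Hp tb.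
have [hd hphi] := Hp tb; split => //.
by apply/(key t tb tn0 tnT (Cx t tb) Cx hd).
Qed.
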